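(* Let $n\ge 2$, let $W(r)=(1-r^2)^2$, and let $u\in C^2(\mathbb R^n,[-1,1])$ solve $\Delta u=W'(u)$ in $\mathbb R^n$, with $\partial u/\partial x_n>0$ in $\mathbb R^n$, and satisfying the energy bound: there is $C>0$ such that $\int_{B_R}\big(\tfrac12|\nabla u|^2+W(u)\big)\,dx\le CR^{n-1}$ for every $R>1$. Let $V\subseteq{\rm C}(d_o,h_o)$ be the (support of the) associated limit varifold, as described in the context. (a) If there exists $\overline x=(0,\dots,0,\overline x_n)$ with $\overline x_n\in(0,h_o)$ and $\overline x\notin V$, then $\lim_{x_n\to+\infty}u(x',x_n)=1$ for every $x'\in\mathbb R^{n-1}$. (b) If there exists $\underline x=(0,\dots,0,\underline x_n)$ with $\underline x_n\in(-h_o,0)$ and $\underline x\notin V$, then $\lim_{x_n\to-\infty}u(x',x_n)=-1$ for every $x'\in\mathbb R^{n-1}$.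
   Context: Points of $\mathbb R^n$ are written $x=(x',x_n)\in\mathbb R^{n-1}\times\mathbb R$. For $\varepsilon>0$ set $u_\varepsilon(x):=u(x/\varepsilon)$. For $d,h>0$, ${\rm C}(d,h):=\{x: |x'|<d,\ |x_n|<h\}$; the numbers $d_o,h_o>0$ are fixed. Limit varifold: under the energy bound, by Hutchinson–Tonegawa there is a sequence $\varepsilon_j\to0^+$ such that the Radon measures $\mu_j:=\big(\tfrac{\varepsilon_j}{2}|\nabla u_{\varepsilon_j}|^2+\tfrac1{\varepsilon_j}W(u_{\varepsilon_j})\big)dx$ converge weakly-* on ${\rm C}(d_o,h_o)$ to a Radon measure $\mu$, which is (a constant multiple of) the weight of a limit varifold; $V$ denotes its support $\operatorname{supp}\mu$, a relatively closed subset of ${\rm C}(d_o,h_o)$. Along this sequence (Hutchinson–Tonegawa): $u_{\varepsilon_j}\to\pm1$ uniformly on each connected compact subset of ${\rm C}(d_o,h_o)\setminus V$; and for every open $\tilde U\Subset{\rm C}(d_o,h_o)$, every $c\in(-1,1)$ and every $\delta>0$, for all sufficiently large $j$, $\{|u_{\varepsilon_j}|\le c\}\cap\tilde U\subseteq\bigcup_{p\in V}B_\delta(p)$. *)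

(* Defs.v *)
From HB Require Import structures.
From mathcomp Require Import all_boot all_order all_algebra.
From mathcomp Require Import all_classical all_reals all_analysis.
Set Implicit Arguments. Unset Strict Implicit. Unset Printing Implicit Defensive.
Import Order.TTheory GRing.Theory Num.Theory.
Import numFieldNormedType.Exports.
Local Open Scope classical_set_scope.
Local Open Scope ring_scope.

Section Defs.
Variable R : realType.

(* R^n is 'rV[R]_n.  For n = m.+1, x = (x', x_n) with x' the first m
   coordinates and x_n = x 0 ord_max the last one. *)
Definition lastc (m : nat) (x : 'rV[R]_m.+1) : R := x 0 ord_max.
Definition xprime (m : nat) (x : 'rV[R]_m.+1) : 'rV[R]_m :=
  \row_(j < m) x 0 (widen_ord (leqnSn m) j).
Definition pt (m : nat) (x' : 'rV[R]_m) (t : R) : 'rV[R]_m.+1 :=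
  \row_(i < m.+1) (if unlift ord_max i is Some j then x' 0 j else t).

(* Euclidean norm (the library norm on 'rV is the sup norm). *)
Definition enorm (k : nat) (x : 'rV[R]_k) : R :=
  Num.sqrt (\sum_(i < k) x 0 i ^+ 2).
Definition eball (k : nat) (p : 'rV[R]_k) (r : R) : set 'rV[R]_k :=
  [set y | enorm (y - p) < r].

Definition cyl (m : nat) (d h : R) : set 'rV[R]_m.+1 :=
  [set x | enorm (xprime x) < d /\ `|lastc x| < h].

Definition ev (k : nat) (i : 'I_k) : 'rV[R]_k := delta_mx 0 i.
Definition partial (k : nat) (i : 'I_k) (f : 'rV[R]_k -> R) : 'rV[R]_k -> R :=
  fun x => 'D_(ev i) f x.
Definition C2 (k : nat) (f : 'rV[R]_k -> R) : Prop :=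
  continuous f /\
  forall i : 'I_k,
    (forall x, derivable f x (ev i)) /\ continuous (partial i f) /\
    forall j : 'I_k,
      (forall x, derivable (partial i f) x (ev j)) /\
      continuous (partial j (partial i f)).
Definition lap (k : nat) (f : 'rV[R]_k -> R) (x : 'rV[R]_k) : R :=
  \sum_(i < k) partial i (partial i f) x.
Definition gradsq (k : nat) (f : 'rV[R]_k -> R) (x : 'rV[R]_k) : R :=
  \sum_(i < k) (partial i f x) ^+ 2.

Definition W (r : R) : R := (1 - r ^+ 2) ^+ 2.
Definition Wp (r : R) : R := 4 * r * (r ^+ 2 - 1).

(* Lebesgue integral on R^k of an extended-real function, as the iterated
   one-dimensional Lebesgue integral (Tonelli/Fubini). *)
Definition rcons0 (k : nat) (t : R) (y : 'rV[R]_k) : 'rV[R]_k.+1 :=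
  \row_(i < k.+1) (if unlift ord0 i is Some j then y 0 j else t).

Fixpoint iint (k : nat) : ('rV[R]_k -> \bar R) -> \bar R :=
  match k return ('rV[R]_k -> \bar R) -> \bar R with
  | 0 => fun f => f 0
  | k'.+1 => fun f =>
      (\int[@lebesgue_measure R]_(t in setT)
          iint (fun y : 'rV[R]_k' => f (rcons0 (t : R) y)))%E
  end.

Definition BorelT (k : nat) := g_sigma_algebraType (@open 'rV[R]_k).

Definition resc (k : nat) (u : 'rV[R]_k -> R) (eps : R) : 'rV[R]_k -> R :=
  fun x => u (eps^-1 *: x).

(* density of mu_eps = (eps/2 |grad u_eps|^2 + W(u_eps)/eps) dx *)
Definition edens (k : nat) (u : 'rV[R]_k -> R) (eps : R) (x : 'rV[R]_k) : R :=
  eps / 2 * gradsq (resc u eps) x + W (resc u eps x) / eps.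

Definition Cc_in (k : nat) (U : set 'rV[R]_k) (phi : 'rV[R]_k -> R) : Prop :=
  continuous phi /\ compact (closure [set x | phi x != 0]) /\
  closure [set x | phi x != 0] `<=` U.

Definition msupp (k : nat) (U : set 'rV[R]_k)
    (mu : {measure set (BorelT k) -> \bar R}) : set 'rV[R]_k :=
  [set p | U p /\ forall r : R, 0 < r -> (0 < mu (eball p r `&` U))%E].

End Defs.

(* Main.v *)
Require Import Defs.
From HB Require Import structures.
From mathcomp Require Import all_boot all_order all_algebra.
From mathcomp Require Import all_classical all_reals all_analysis.
From mathcomp Require Import lra ring.
Import Order.TTheory GRing.Theory Num.Theory.
Import numFieldNormedType.Exports.
Local Open Scope classical_set_scope.
Local Open Scope ring_scope.
Set Implicit Arguments. Unset Strict Implicit.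
Section Aux.
Variable R : realType.
Implicit Types (m : nat).

Lemma ptE m (y : 'rV[R]_m) t (i : 'I_m) : pt y t 0 (widen_ord (leqnSn m) i) = y 0 i.
Proof.
rewrite /pt mxE; case: unliftP => [j|] /=.
  by move=> /(congr1 val) /=; rewrite /bump leqNgt ltn_ord /= add0n => /val_inj ->.
by move=> /(congr1 val) /= /eqP; rewrite ltn_eqF.
Qed.

Lemma ptEmax m (y : 'rV[R]_m) t : pt y t 0 ord_max = t.
Proof. by rewrite /pt mxE unlift_none. Qed.

Lemma xprime_pt m (y : 'rV[R]_m) t : xprime (pt y t) = y.
Proof. by apply/rowP => j; rewrite /xprime mxE ptE. Qed.

Lemma lastc_pt m (y : 'rV[R]_m) t : lastc (pt y t) = t.
Proof. by rewrite /lastc ptEmax. Qed.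

Lemma pt_lin m (a b : R) (y y' : 'rV[R]_m) t t' :
  a *: pt y t + b *: pt y' t' = pt (a *: y + b *: y') (a * t + b * t').
Proof.
apply/rowP => k; rewrite !mxE; case: (unlift ord_max k) => [j|] //.
by rewrite !mxE.
Qed.

Lemma pt_ev m (y : 'rV[R]_m) t h : h *: ev R ord_max + pt y t = pt y (h + t).
Proof.
apply/rowP => k; rewrite /ev !mxE; case: unliftP => [j ->|->].
  by rewrite eqxx /= eq_sym (negbTE (neq_lift _ _)) mulr0 add0r.
by rewrite !eqxx mulr1.
Qed.

Lemma enorm_ge0 k (x : 'rV[R]_k) : 0 <= enorm x.
Proof. exact: sqrtr_ge0. Qed.

Lemma enorm_coord k (x : 'rV[R]_k) i : `|x 0 i| <= enorm x.
Proof.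
rewrite -sqrtr_sqr /enorm ler_wsqrtr // (bigD1 i) //= lerDl.
by apply: sumr_ge0 => j _; apply: sqr_ge0.
Qed.

Lemma enorm_l1 k (x : 'rV[R]_k) : enorm x <= \sum_(i < k) `|x 0 i|.
Proof.
have [H1 H2] : \sum_(i < k) x 0 i ^+ 2 <= (\sum_(i < k) `|x 0 i|) ^+ 2 /\
   0 <= \sum_(i < k) `|x 0 i|.
  apply: (big_rec2 (fun S T => S <= T ^+ 2 /\ 0 <= T)); first by rewrite expr0n.
  move=> i S T _ [h1 h2]; split; last by rewrite addr_ge0.
  have := normr_ge0 (x 0 i); rewrite -[x 0 i ^+ 2]real_normK ?num_real; nra.
by rewrite /enorm -(ger0_norm H2) -sqrtr_sqr ler_wsqrtr.
Qed.

Lemma enorm_wtri k (a b : 'rV[R]_k) : enorm (a + b) <= k%:R * (enorm a + enorm b).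
Proof.
apply: le_trans (enorm_l1 (a + b)) _.
rewrite -[k in k%:R]card_ord -sumr_const.
rewrite mulr_suml; apply: ler_sum => i _; rewrite mxE mul1r.
by apply: (le_trans (ler_normD _ _)); apply: lerD; apply: enorm_coord.
Qed.

Lemma enormZ k (c : R) (x : 'rV[R]_k) : enorm (c *: x) = `|c| * enorm x.
Proof.
rewrite /enorm; under eq_bigr do rewrite mxE exprMn.
by rewrite -mulr_sumr sqrtrM ?sqr_ge0 // sqrtr_sqr.
Qed.

Lemma enorm_pt0 m (y : 'rV[R]_m) : enorm (pt y 0) = enorm y.
Proof.
rewrite /enorm big_ord_recr /= ptEmax expr0n /= addr0.
by congr Num.sqrt; apply: eq_bigr => i _; rewrite ptE.
Qed.


Lemma cont_sqsum k k' (f : 'I_k' -> 'I_k) (a : 'I_k' -> R) :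
  continuous (fun x : 'rV[R]_k => Num.sqrt (\sum_(j < k') (x 0 (f j) - a j) ^+ 2)).
Proof.
have hg : forall c : R, continuous (fun r : R => (r - c) ^+ 2).
  move=> c r; apply: (continuous_comp (f := fun r : R => r - c) (g := fun r : R => r ^+ 2));
    last exact: exprn_continuous.
  by apply: cvgB; [exact: cvg_id | exact: cvg_cst].
have hc : forall i, continuous (fun x : 'rV[R]_k => (x 0 (f i) - a i) ^+ 2).
  move=> i y; apply: (continuous_comp (f := fun x : 'rV[R]_k => x 0 (f i))
    (g := fun r : R => (r - a i) ^+ 2)); last exact: hg.
  exact: coord_continuous.
have hs : continuous (fun x : 'rV[R]_k => \sum_(j < k') (x 0 (f j) - a j) ^+ 2).
  by apply: (continuous_big add_continuous) => j _; exact: hc.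
move=> y; apply: (continuous_comp (f := fun x : 'rV[R]_k => \sum_(j < k') (x 0 (f j) - a j) ^+ 2)
  (g := Num.sqrt)); [exact: hs | exact: sqrt_continuous].
Qed.

Lemma eball_open k (p : 'rV[R]_k) r : open (eball p r).
Proof.
have -> : eball p r = (fun x : 'rV[R]_k =>
    Num.sqrt (\sum_(j < k) (x 0 (id j) - p 0 j) ^+ 2)) @^-1` `]-oo, r[.
  have E : forall x, enorm (x - p) = Num.sqrt (\sum_(j < k) (x 0 (id j) - p 0 j) ^+ 2).
    by move=> x; rewrite /enorm; apply: congr1; apply: eq_bigr => j _; rewrite !mxE.
  by apply/seteqP; split => x /=; rewrite /eball /= ?E in_itv.
apply: open_comp; last exact: lray_open.
by move=> x _; apply: cont_sqsum.
Qed.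

Lemma cyl_open m (d h : R) : open (cyl d h : set 'rV[R]_m.+1).
Proof.
have -> : cyl d h = (fun x : 'rV[R]_m.+1 =>
    Num.sqrt (\sum_(j < m) (x 0 (widen_ord (leqnSn m) j) - 0) ^+ 2)) @^-1` `]-oo, d[
   `&` (fun x : 'rV[R]_m.+1 => `|x 0 ord_max|) @^-1` `]-oo, h[.
  have E : forall x : 'rV[R]_m.+1, enorm (xprime x) =
     Num.sqrt (\sum_(j < m) (x 0 (widen_ord (leqnSn m) j) - 0) ^+ 2).
    by move=> x; rewrite /enorm; apply: congr1; apply: eq_bigr => j _; rewrite !mxE subr0.
  by apply/seteqP; split => x /=; rewrite /cyl /lastc -E !in_itv /=.
apply: openI; (apply: open_comp; last exact: lray_open) => x _.
  exact: cont_sqsum.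
apply: (continuous_comp (f := fun x : 'rV[R]_m.+1 => x 0 ord_max)
  (g := Num.norm)); last exact: norm_continuous.
exact: coord_continuous.
Qed.

Lemma open_measurable_B k (A : set 'rV[R]_k) : open A ->
  measurable (A : set (BorelT R k)).
Proof. by move=> oA; apply: sub_sigma_algebra. Qed.


Lemma not_supp_near m (d h : R) (mu : {measure set (BorelT R m.+1) -> \bar R})
  (xb : 'rV[R]_m.+1) : cyl d h xb -> ~ msupp (cyl d h) mu xb ->
  exists r0, 0 < r0 /\ forall p, cyl d h p -> enorm (p - xb) < r0 ->
     ~ msupp (cyl d h) mu p.
Proof.
move=> Hc Hn.
have [r [r_gt0 Hr]] : exists r, 0 < r /\ ~ (0 < mu (eball xb r `&` cyl d h))%E.
  apply: contrapT => H; apply: Hn; split => // r r0; apply: contrapT => Hr.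
  by apply: H; exists r.
have kgt0 : 0 < (m.+1)%:R :> R by rewrite ltr0n.
exists (r / (2 * (m.+1)%:R)); split; first by rewrite divr_gt0 ?mulr_gt0.
move=> p Hp Hpx [_ Hs].
have := Hs _ (divr_gt0 r_gt0 (mulr_gt0 (ltr0Sn R 1) kgt0)).
apply/negP; rewrite -leNgt.
apply: le_trans (_ : mu (eball xb r `&` cyl d h) <= 0)%E; last first.
  by rewrite leNgt; apply/negP.
apply: le_measure; rewrite ?inE.
- by apply: measurableI; apply: open_measurable_B; [exact: eball_open|exact: cyl_open].
- by apply: measurableI; apply: open_measurable_B; [exact: eball_open|exact: cyl_open].
move=> y [Hy Hyc]; split => //.
rewrite /eball /=; have -> : y - xb = (y - p) + (p - xb) by rewrite addrA subrK.
apply: le_lt_trans (enorm_wtri _ _) _.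
move: Hy; rewrite /eball /= => Hy.
have kn0 : (m.+1)%:R != 0 :> R by rewrite gt_eqF.
have E2 : r / (2 * (m.+1)%:R) + r / (2 * (m.+1)%:R) = r / (m.+1)%:R by field.
rewrite mulrC -ltr_pdivlMr // -E2; exact: ltrD.
Qed.


Lemma g_deriv m (u : 'rV[R]_m.+1 -> R) (uC2 : C2 u) (x' : 'rV[R]_m) (t : R) :
  is_derive t 1 (fun s => u (pt x' s)) (partial ord_max u (pt x' t)).
Proof.
have E : (fun h : R => h^-1 *: (((fun s => u (pt x' s)) \o shift t) (h *: 1) - u (pt x' t)))
  = (fun h : R => h^-1 *: ((u \o shift (pt x' t)) (h *: ev R ord_max) - u (pt x' t))).
  by apply/funext => h /=; rewrite pt_ev; congr (_ *: (u (pt _ (_ + _)) - _)); exact: mulr1.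
split; first by rewrite /derivable E; exact: ((uC2.2 ord_max).1 _).
by rewrite /partial /derive E.
Qed.

Lemma g_incr m (u : 'rV[R]_m.+1 -> R) (uC2 : C2 u)
  (umono : forall x, 0 < partial ord_max u x) (x' : 'rV[R]_m) (a b : R) :
  a < b -> u (pt x' a) < u (pt x' b).
Proof.
move=> ab.
have H : {within `[a, b], continuous (fun s => u (pt x' s))}.
  apply: derivable_within_continuous => x _.
  by case: (g_deriv uC2 x' x).
have [c _ Hc] := @MVT R (fun s => u (pt x' s)) (fun s => partial ord_max u (pt x' s)) a b ab
  (fun x _ => g_deriv uC2 x' x) H.
by rewrite -subr_gt0 Hc mulr_gt0 // subr_gt0.
Qed.


Lemma enorm0 k : enorm (0 : 'rV[R]_k) = 0.
Proof. by rewrite /enorm big1 ?sqrtr0 // => i _; rewrite mxE expr0n. Qed.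

Lemma key m (d_o h_o : R) (hd : 0 < d_o) (u : 'rV[R]_m.+1 -> R)
  (eps : nat -> R) (eps_pos : forall j, 0 < eps j) (eps_to0 : eps @ \oo --> 0)
  (mu : {measure set (BorelT R m.+1) -> \bar R})
  (HT_unif : forall K : set 'rV[R]_m.+1, compact K -> connected K ->
     K `<=` cyl d_o h_o `\` msupp (cyl d_o h_o) mu ->
     exists s : R, (s = 1 \/ s = -1) /\
       forall delta : R, 0 < delta -> \forall j \near \oo,
         forall x, K x -> `|resc u (eps j) x - s| < delta)
  (xn : R) (hxn : `|xn| < h_o) (hns : ~ msupp (cyl d_o h_o) mu (pt 0 xn))
  (x' : 'rV[R]_m) :
  exists s0 : R, (s0 = 1 \/ s0 = -1) /\ forall delta : R, 0 < delta ->
    \forall j \near \oo, `|u (pt x' (xn / eps j)) - s0| < delta.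
Proof.
have hc : cyl d_o h_o (pt (0 : 'rV[R]_m) xn).
  by rewrite /cyl /= xprime_pt lastc_pt enorm0.
have [r0 [r0_gt0 Hr0]] := not_supp_near hc hns.
pose phi := fun s : R => s *: pt x' 0 + pt 0 xn.
have Ephi : forall s, phi s = pt (s *: x') xn.
  move=> s; rewrite /phi -[pt 0 xn]scale1r pt_lin scaler0 addr0 mulr0 mul1r add0r.
  by [].
have ne_ge0 := enorm_ge0 x'.
pose del := Num.min r0 d_o / (enorm x' + 1).
have del_gt0 : 0 < del by rewrite divr_gt0 // ?lt_min ?r0_gt0 ?hd // ltr_wpDl.
have Hsm : forall s, 0 <= s <= del -> s * enorm x' < Num.min r0 d_o.
  move=> s /andP [s0 sd].
  have : del * (enorm x' + 1) = Num.min r0 d_o.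
    by rewrite /del divfK // gt_eqF // ltr_wpDl.
  move=> E; rewrite -E; nra.
have cphi : continuous phi.
  move=> s; apply: cvgD; last exact: cvg_cst.
  by apply: cvgZr_tmp; exact: cvg_id.
pose K := phi @` `[0, del].
have Kcomp : compact K.
  by apply: continuous_compact; [exact: continuous_subspaceT | exact: segment_compact].
have Kconn : connected K.
  apply: connected_continuous_connected; last exact: continuous_subspaceT.
  by apply/connected_intervalP; exact: interval_is_interval.
have Ksub : K `<=` cyl d_o h_o `\` msupp (cyl d_o h_o) mu.
  move=> _ [s /= Hs <-].
  have Hs' : 0 <= s <= del by move: Hs; rewrite in_itv.
  have := Hsm s Hs'; rewrite lt_min => /andP [h1 h2].
  have s0 : 0 <= s by case/andP: Hs'.
  have Hcy : cyl d_o h_o (phi s).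
    by rewrite Ephi /cyl /= xprime_pt lastc_pt enormZ ger0_norm.
  split => //; apply: Hr0 => //.
  by rewrite /phi addrK enormZ enorm_pt0 ger0_norm.
have [s0 [Hs01 Hs0]] := HT_unif K Kcomp Kconn Ksub.
exists s0; split => // delta dgt0.
have Hnear := Hs0 delta dgt0.
have Heps : \forall j \near \oo, eps j <= del.
  move/cvgrPdist_lt: eps_to0 => /(_ del del_gt0).
  apply: filterS => j; rewrite sub0r normrN ger0_norm; [exact: ltW | exact: ltW].
apply: filterS2 Hnear Heps => j Hj He.
have Kx : K (phi (eps j)).
  by exists (eps j) => //; rewrite /= in_itv /= (ltW (eps_pos j)) /=.
have := Hj (phi (eps j)) Kx.
rewrite /resc /phi scalerDr scalerA mulVf ?gt_eqF // scale1r.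
rewrite -[pt x' 0]scale1r pt_lin scale1r scaler0 addr0 mulr0 add0r mulrC.
by [].
Qed.

End Aux.
(* Dimension n = m.+1 with n >= 2, i.e. 1 <= m; x = (x', x_n). *)
Theorem lemma3p1 (R : realType) (m : nat) (hm : (1 <= m)%N)
  (d_o h_o : R) (hd : 0 < d_o) (hh : 0 < h_o)
  (u : 'rV[R]_m.+1 -> R)
  (uC2 : C2 u)
  (urange : forall x, -1 <= u x <= 1)
  (ueq : forall x, lap u x = Wp (u x))
  (umono : forall x, 0 < partial ord_max u x)
  (uenergy : exists C : R, 0 < C /\ forall r : R, 1 < r ->
     (iint (fun x => ((gradsq u x / 2 + W (u x)) * \1_(eball 0 r) x)%:E)
        <= (C * r ^+ m)%:E)%E)
  (eps : nat -> R) (eps_pos : forall j, 0 < eps j) (eps_to0 : eps @ \oo --> 0)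
  (mu : {measure set (BorelT R m.+1) -> \bar R})
  (mu_radon : forall K : set 'rV[R]_m.+1, compact K -> K `<=` cyl d_o h_o ->
     (mu K < +oo)%E)
  (mu_lim : forall phi : 'rV[R]_m.+1 -> R, Cc_in (cyl d_o h_o) phi ->
     (fun j => iint (fun x => (phi x * edens u (eps j) x)%:E)) @ \oo -->
       (\int[mu]_(x in cyl d_o h_o) (phi x)%:E)%E)
  (HT_unif : forall K : set 'rV[R]_m.+1, compact K -> connected K ->
     K `<=` cyl d_o h_o `\` msupp (cyl d_o h_o) mu ->
     exists s : R, (s = 1 \/ s = -1) /\
       forall delta : R, 0 < delta -> \forall j \near \oo,
         forall x, K x -> `|resc u (eps j) x - s| < delta)
  (HT_conc : forall U : set 'rV[R]_m.+1, open U -> compact (closure U) ->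
     closure U `<=` cyl d_o h_o ->
     forall c : R, -1 < c < 1 -> forall delta : R, 0 < delta ->
     \forall j \near \oo, forall x, U x -> `|resc u (eps j) x| <= c ->
       exists p, msupp (cyl d_o h_o) mu p /\ enorm (x - p) < delta) :
  ((exists xn : R, 0 < xn < h_o /\ ~ msupp (cyl d_o h_o) mu (pt 0 xn)) ->
     forall x' : 'rV[R]_m, u (pt x' t) @[t --> +oo] --> (1 : R)) /\
  ((exists xn : R, - h_o < xn < 0 /\ ~ msupp (cyl d_o h_o) mu (pt 0 xn)) ->
     forall x' : 'rV[R]_m, u (pt x' t) @[t --> -oo] --> (-1 : R)).
Proof.
have ne : forall (P : nat -> Prop), (\forall j \near \oo, P j) -> exists j, P j.
  move=> P HP; exact: (filter_ex HP).
split.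
- case=> xn [/andP [xn0 xnh] hns] x'.
  have hxn : `|xn| < h_o by rewrite ger0_norm ?ltW.
  have [s0 [Hs Hconv]] := key hd eps_pos eps_to0 HT_unif hxn hns x'.
  have Ht : forall M, \forall j \near \oo, M < xn / eps j.
    move=> M; have hM1 : 0 < `|M| + 1 by rewrite ltr_wpDl.
    have hM : 0 < xn / (`|M| + 1) by rewrite divr_gt0.
    move/cvgrPdist_lt: eps_to0 => /(_ _ hM); apply: filterS => j.
    rewrite sub0r normrN ger0_norm ?(ltW (eps_pos j)) // => hj.
    have ej := eps_pos j.
    rewrite ltr_pdivlMr //.
    have E : xn / (`|M| + 1) * (`|M| + 1) = xn by rewrite divfK // gt_eqF.
    have hMM : M <= `|M| by apply: ler_norm.
    nra.
  case: Hs => Hs; subst s0.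
    apply/cvgrPdist_lt => e e0.
    have [j [Hj _]] : exists j, `|u (pt x' (xn / eps j)) - 1| < e /\ True.
      by apply: ne; apply: filterS (Hconv e e0).
    apply: filterS (nbhs_pinfty_gt (num_real (xn / eps j))) => t ht.
    have h1 := g_incr uC2 umono x' ht.
    have /andP [_ h2] := urange (pt x' t).
    move: Hj; rewrite ltr_norml => /andP [Hj1 Hj2].
    rewrite ger0_norm ?subr_ge0 //; lra.
  exfalso.
  have h0 := g_incr uC2 umono x' (ltrN10 R).
  have /andP [h2 _] := urange (pt x' (-1)).
  have eta : 0 < u (pt x' 0) + 1 by lra.
  have [j [Hj1 Hj2]] : exists j, `|u (pt x' (xn / eps j)) - -1| < u (pt x' 0) + 1 /\
      0 < xn / eps j.
    by apply: ne; apply: filterS2 (Hconv _ eta) (Ht 0) => j a b.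
  have h3 := g_incr uC2 umono x' Hj2.
  move: Hj1; rewrite ltr_norml => /andP [_ ?]; lra.
- case=> xn [/andP [xn0 xnh] hns] x'.
  have hxn : `|xn| < h_o by rewrite ltr0_norm // ltrNl.
  have [s0 [Hs Hconv]] := key hd eps_pos eps_to0 HT_unif hxn hns x'.
  have Ht : forall M, \forall j \near \oo, xn / eps j < M.
    move=> M; have hM1 : 0 < `|M| + 1 by rewrite ltr_wpDl.
    have hM : 0 < - xn / (`|M| + 1) by rewrite divr_gt0 // oppr_gt0.
    move/cvgrPdist_lt: eps_to0 => /(_ _ hM); apply: filterS => j.
    rewrite sub0r normrN ger0_norm ?(ltW (eps_pos j)) // => hj.
    have ej := eps_pos j.
    rewrite ltr_pdivrMr //.
    have E : - xn / (`|M| + 1) * (`|M| + 1) = - xn by rewrite divfK // gt_eqF.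
    have hMM : - M <= `|M| by rewrite -normrN; apply: ler_norm.
    nra.
  case: Hs => Hs; subst s0; last first.
    apply/cvgrPdist_lt => e e0.
    have [j [Hj _]] : exists j, `|u (pt x' (xn / eps j)) - -1| < e /\ True.
      by apply: ne; apply: filterS (Hconv e e0).
    apply: filterS (nbhs_ninfty_lt (num_real (xn / eps j))) => t ht.
    have h1 := g_incr uC2 umono x' ht.
    have /andP [h2 _] := urange (pt x' t).
    move: Hj; rewrite ltr_norml => /andP [Hj1 Hj2].
    rewrite ler0_norm ?subr_le0; lra.
  exfalso.
  have h0 := g_incr uC2 umono x' (ltr01 : (0:R) < 1).
  have /andP [_ h2] := urange (pt x' 1).
  have eta : 0 < 1 - u (pt x' 0) by lra.
  have [j [Hj1 Hj2]] : exists j, `|u (pt x' (xn / eps j)) - 1| < 1 - u (pt x' 0) /\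
      xn / eps j < 0.
    by apply: ne; apply: filterS2 (Hconv _ eta) (Ht 0) => j a b.
  have h3 := g_incr uC2 umono x' Hj2.
  move: Hj1; rewrite ltr_norml => /andP [? _]; lra.
Qed.
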